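(* In the FAVANO process, assume each $\nabla f_i$ is $L$-Lipschitz, the stochastic gradients have bounded variance $\sigma^2$, and $\eta<\frac{1}{4LK^2}$ and $\eta<\frac{1}{2LK}$. Then for every client $i$, time step $t\ge0$ and $q\in\{1,\dots,K\}$, $$\mathbb{E}\langle\nabla f(\mu_t),-h^i_{t+1,q}\rangle\le\frac{\mathbb{E}\|\nabla f(\mu_t)\|^2}{4}+C^i_t-\mathbb{E}\langle\nabla f(\mu_t),\nabla f_i(\mu_t)\rangle,$$ where $C^i_t=4L^2\eta^2K^2\sigma^2+20L^2\,\mathbb{E}\|w^i_t-\mu_t\|^2+16L^2\eta^2K^2\,\mathbb{E}\|\nabla f_i(\mu_t)\|^2$.
   Context: FAVANO process. Fix integers $n\ge1$, $1\le s\le n$, $K\ge1$, $d\ge1$, a step size $\eta>0$ and differentiable $f_1,\dots,f_n:\mathbb{R}^d\to\mathbb{R}$, $f=\frac1n\sum_i f_i$. All random variables live on one probability space. For each client $i$ a stochastic gradient oracle returns, at a query point $x$, $\widetilde g^i(x)=\nabla f_i(x)+\xi$ where, conditionally on everything generated before the query (including $x$), $\xi$ has mean zero (each query uses fresh noise). Initialize $w_0\in\mathbb{R}^d$ deterministic and $w_0^i=w_0$ for all $i$. For each $t\ge1$, each client $i$ and each $q\ge1$ define recursively $\widetilde h^i_{t,q}=\widetilde g^i\big(w^i_{t-1}-\eta\sum_{r=1}^{q-1}\widetilde h^i_{t,r}\big)$ and $h^i_{t,q}=\nabla f_i\big(w^i_{t-1}-\eta\sum_{r=1}^{q-1}\widetilde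 h^i_{t,r}\big)$. At each $t\ge1$ there are random integers $E^1_t,\dots,E^n_t\ge0$ with $\mathbf{P}(E^i_t>0)>0$, and a random subset $\mathcal{S}_t\subseteq\{1,\dots,n\}$ uniformly distributed among subsets of size $s$; the family $(\mathcal S_t,E^1_t,\dots,E^n_t)$ is independent of all the other randomness (the past up to time $t-1$ and all $\widetilde h^i_{t,q}$), and $\mathcal S_t$ is independent of $(E^i_t)_i$. The weight $\alpha^i_t$ is either $\mathbf{P}(E^i_t>0)\,(E^i_t\wedge K)$ (stochastic version) or $\mathbb{E}[E^i_t\wedge K]$ (deterministic version), where $a\wedge b=\min(a,b)$. Set $\check h^i_t=\frac{1}{\alpha^i_t}\sum_{q=1}^{E^i_t\wedge K}\widetilde h^i_{t,q}$ if $E^i_t>0$ and $\check h^i_t=0$ otherwise. Updates: $w_t=\frac{1}{s+1}\big(w_{t-1}+\sum_{i\in\mathcal S_t}(w^i_{t-1}-\eta\check h^i_t)\big)$; $w^i_t=w_t$ for $i\in\mathcal S_t$ and $w^i_t=w^i_{t-1}$ for $i\notin\mathcal S_t$. Define $\mu_t=\frac{1}{n+1}\big(w_t+\sum_{i=1}^n w^i_t\big)$. All expectations appearing are assumed finite. Smoothness: $\|\nabla f_i(x)-\nabla f_i(y)\|\le L\|x-y\|$ for all $i,x,y$, with $L>0$. Bounded variance: conditionally on everything generated before a query at $x$, $\mathbb{E}\|\widetilde g^i(x)-\nabla f_i(x)\|^2\le\sigma^2$. *)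

(* Defs.v *)
From HB Require Import structures.
From mathcomp Require Import all_boot all_order all_algebra.
From mathcomp Require Import all_classical all_reals all_analysis.
Import Order.TTheory GRing.Theory Num.Theory.
Import numFieldNormedType.Exports.
Local Open Scope classical_set_scope.
Local Open Scope ring_scope.

Set Implicit Arguments.
Unset Strict Implicit.
Unset Printing Implicit Defensive.

Definition dotv (R : realType) (d : nat) (u v : 'rV[R]_d) : R :=
  \sum_(j < d) u 0 j * v 0 j.

Definition enorm (R : realType) (d : nat) (u : 'rV[R]_d) : R :=
  Num.sqrt (dotv u u).

Definition is_gradient (R : realType) (d : nat)
  (g : 'rV[R]_d -> R) (G : 'rV[R]_d -> 'rV[R]_d) : Prop :=
  forall x, differentiable g x /\ forall v, 'd g x v = dotv (G x) v.

(** * The FAVANO process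
   Primitive random inputs:
   - S t : T -> {set 'I_n}              the sampled client set S_t (t >= 1)
   - E t i : T -> nat                   the number of local steps E^i_t (t >= 1)
   - ht t i q : T -> 'rV_d              the stochastic gradient \tilde h^i_{t,q}
                                         (t >= 1, q >= 1), i.e. the oracle answer
   - alpha t i : T -> R                 the weights alpha^i_t *)

Definition alpha_of (R : realType) (dm : measure_display) (T : measurableType dm)
  (P : probability T R) (n K : nat) (E : nat -> 'I_n -> T -> nat)
  (stoch : bool) (t : nat) (i : 'I_n) (w : T) : R :=
  if stoch then
    fine (P [set w' | (0 < E t i w')%N]) * (minn (E t i w) K)%:R
  else
    fine ('E_P[fun w' => (minn (E t i w') K)%:R])%E.

Definition hcheck (R : realType) (T : Type) (n d K : nat)
  (E : nat -> 'I_n -> T -> nat) (ht : nat -> 'I_n -> nat -> T -> 'rV[R]_d)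
  (alpha : nat -> 'I_n -> T -> R) (t : nat) (i : 'I_n) (w : T) : 'rV[R]_d :=
  if (0 < E t i w)%N then
    (alpha t i w)^-1 *: \sum_(1 <= q < (minn (E t i w) K).+1) ht t i q w
  else 0.

Fixpoint fstate (R : realType) (T : Type) (n d s K : nat) (eta : R)
  (w0 : 'rV[R]_d) (S : nat -> T -> {set 'I_n}) (E : nat -> 'I_n -> T -> nat)
  (ht : nat -> 'I_n -> nat -> T -> 'rV[R]_d) (alpha : nat -> 'I_n -> T -> R)
  (t : nat) (w : T) : 'rV[R]_d * {ffun 'I_n -> 'rV[R]_d} :=
  match t with
  | 0 => (w0, [ffun => w0])
  | t'.+1 =>
      let st := fstate s K eta w0 S E ht alpha t' w in
      let wn := (s.+1%:R)^-1 *: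
                  (st.1 + \sum_(i in S t w)
                            (st.2 i - eta *: hcheck K E ht alpha t i w)) in
      (wn, [ffun i => if i \in S t w then wn else st.2 i])
  end.

Definition wsrv (R : realType) (T : Type) (n d s K : nat) (eta : R)
  (w0 : 'rV[R]_d) (S : nat -> T -> {set 'I_n}) (E : nat -> 'I_n -> T -> nat)
  (ht : nat -> 'I_n -> nat -> T -> 'rV[R]_d) (alpha : nat -> 'I_n -> T -> R)
  (t : nat) (w : T) : 'rV[R]_d :=
  (fstate s K eta w0 S E ht alpha t w).1.

Definition wloc (R : realType) (T : Type) (n d s K : nat) (eta : R)
  (w0 : 'rV[R]_d) (S : nat -> T -> {set 'I_n}) (E : nat -> 'I_n -> T -> nat)
  (ht : nat -> 'I_n -> nat -> T -> 'rV[R]_d) (alpha : nat -> 'I_n -> T -> R)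
  (t : nat) (i : 'I_n) (w : T) : 'rV[R]_d :=
  (fstate s K eta w0 S E ht alpha t w).2 i.

Definition mu (R : realType) (T : Type) (n d s K : nat) (eta : R)
  (w0 : 'rV[R]_d) (S : nat -> T -> {set 'I_n}) (E : nat -> 'I_n -> T -> nat)
  (ht : nat -> 'I_n -> nat -> T -> 'rV[R]_d) (alpha : nat -> 'I_n -> T -> R)
  (t : nat) (w : T) : 'rV[R]_d :=
  (n.+1%:R)^-1 *: (wsrv s K eta w0 S E ht alpha t w
                   + \sum_(i < n) wloc s K eta w0 S E ht alpha t i w).

(** query point of the q-th local step of client i in round t (t, q >= 1):
    w^i_{t-1} - eta * sum_{r=1}^{q-1} \tilde h^i_{t,r} *)
Definition query (R : realType) (T : Type) (n d s K : nat) (eta : R)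
  (w0 : 'rV[R]_d) (S : nat -> T -> {set 'I_n}) (E : nat -> 'I_n -> T -> nat)
  (ht : nat -> 'I_n -> nat -> T -> 'rV[R]_d) (alpha : nat -> 'I_n -> T -> R)
  (t : nat) (i : 'I_n) (q : nat) (w : T) : 'rV[R]_d :=
  wloc s K eta w0 S E ht alpha t.-1 i w - eta *: \sum_(1 <= r < q) ht t i r w.

(** * Generated sigma-algebras, through generating events *)

Definition ev_set (T : Type) (n : nat) (X : T -> {set 'I_n}) : set (set T) :=
  [set A | exists B : {set 'I_n}, A = X @^-1` [set B]].

Definition ev_nat (T : Type) (X : T -> nat) : set (set T) :=
  [set A | exists k : nat, A = X @^-1` [set k]].

Definition ev_vec (R : realType) (T : Type) (d : nat) (X : T -> 'rV[R]_d)
  : set (set T) :=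
  [set A | exists (j : 'I_d) (B : set R),
      measurable B /\ A = (fun w => X w 0 j) @^-1` B].

Definition past_events (R : realType) (T : Type) (n d : nat)
  (S : nat -> T -> {set 'I_n}) (E : nat -> 'I_n -> T -> nat)
  (ht : nat -> 'I_n -> nat -> T -> 'rV[R]_d) (t : nat) : set (set T) :=
  [set A | exists r, (0 < r < t)%N /\
      (ev_set (S r) A \/
       exists j, ev_nat (E r j) A \/
                 exists p, (0 < p)%N /\ ev_vec (ht r j p) A)].

Definition round_events (R : realType) (T : Type) (n d : nat)
  (ht : nat -> 'I_n -> nat -> T -> 'rV[R]_d) (t : nat) : set (set T) :=
  [set A | exists j p, (0 < p)%N /\ ev_vec (ht t j p) A].

Definition own_events (R : realType) (T : Type) (n d : nat)
  (ht : nat -> 'I_n -> nat -> T -> 'rV[R]_d) (t : nat) (i : 'I_n) (q : nat)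
  : set (set T) :=
  [set A | exists p, (0 < p < q)%N /\ ev_vec (ht t i p) A].

Definition E_events (T : Type) (n : nat) (E : nat -> 'I_n -> T -> nat)
  (t : nat) : set (set T) :=
  [set A | exists j, ev_nat (E t j) A].

Definition indep (R : realType) (dm : measure_display) (T : measurableType dm)
  (P : probability T R) (F1 F2 : set (set T)) : Prop :=
  forall A B, F1 A -> F2 B -> P (A `&` B) = (P A * P B)%E.

(** E[X | F] = 0 (componentwise), X integrable *)
Definition cond_mean_zero (R : realType) (dm : measure_display)
  (T : measurableType dm) (P : probability T R) (d : nat)
  (F : set (set T)) (X : T -> 'rV[R]_d) : Prop :=
  (forall j, P.-integrable setT (fun w => (X w 0 j)%:E)) /\
  forall A, F A -> forall j, (\int[P]_(w in A) (X w 0 j)%:E = 0)%E.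

(** E[ ||X||^2 | F ] <= sigma^2 almost surely *)
Definition cond_sqnorm_le (R : realType) (dm : measure_display)
  (T : measurableType dm) (P : probability T R) (d : nat)
  (F : set (set T)) (X : T -> 'rV[R]_d) (sigma : R) : Prop :=
  P.-integrable setT (fun w => (enorm (X w) ^+ 2)%:E) /\
  forall A, F A ->
    (\int[P]_(w in A) (enorm (X w) ^+ 2)%:E <= (sigma ^+ 2)%:E * P A)%E.

(* Main.v *)
Require Import Defs.
From HB Require Import structures.
From mathcomp Require Import all_boot all_order all_algebra.
From mathcomp Require Import all_classical all_reals all_analysis.
From mathcomp Require Import ring lra.
Import Order.TTheory GRing.Theory Num.Theory.
Import numFieldNormedType.Exports.
Local Open Scope classical_set_scope.
Local Open Scope ring_scope.


Section Vec.
Context {R : realType} {d : nat}.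
Implicit Types u v w : 'rV[R]_d.

Lemma dotvC u v : dotv u v = dotv v u.
Proof. by apply: eq_bigr => j _; rewrite mulrC. Qed.
Lemma dotvDl u v w : dotv (u + v) w = dotv u w + dotv v w.
Proof. by rewrite /dotv -big_split; apply: eq_bigr => j _; rewrite mxE mulrDl. Qed.
Lemma dotvDr u v w : dotv w (u + v) = dotv w u + dotv w v.
Proof. by rewrite dotvC dotvDl !(dotvC w). Qed.
Lemma dotvZl c u v : dotv (c *: u) v = c * dotv u v.
Proof. by rewrite /dotv mulr_sumr; apply: eq_bigr => j _; rewrite mxE mulrA. Qed.
Lemma dotvZr c u v : dotv u (c *: v) = c * dotv u v.
Proof. by rewrite dotvC dotvZl dotvC. Qed.
Lemma dotvNl u v : dotv (- u) v = - dotv u v.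
Proof. by rewrite -scaleN1r dotvZl mulN1r. Qed.
Lemma dotvNr u v : dotv u (- v) = - dotv u v.
Proof. by rewrite dotvC dotvNl dotvC. Qed.
Lemma dotvBl u v w : dotv (u - v) w = dotv u w - dotv v w.
Proof. by rewrite dotvDl dotvNl. Qed.
Lemma dotvBr u v w : dotv w (u - v) = dotv w u - dotv w v.
Proof. by rewrite dotvDr dotvNr. Qed.
Lemma dotv_suml I (r : seq I) (Q : pred I) (F : I -> 'rV[R]_d) v :
  dotv (\sum_(i <- r | Q i) F i) v = \sum_(i <- r | Q i) dotv (F i) v.
Proof.
elim: r => [|a r IH]; first by rewrite !big_nil /dotv big1 // => j _; rewrite mxE mul0r.
by rewrite !big_cons; case: (Q a); rewrite ?dotvDl IH.
Qed.
Lemma dotv_sumr I (r : seq I) (Q : pred I) (F : I -> 'rV[R]_d) v :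
  dotv v (\sum_(i <- r | Q i) F i) = \sum_(i <- r | Q i) dotv v (F i).
Proof. by rewrite dotvC dotv_suml; apply: eq_bigr => i _; rewrite dotvC. Qed.

Definition sq u := dotv u u.
Lemma sq_ge0 u : 0 <= sq u.
Proof. by apply: sumr_ge0 => j _; rewrite -expr2 sqr_ge0. Qed.
Lemma enorm_sq u : enorm u ^+ 2 = sq u.
Proof. by rewrite /enorm sqr_sqrtr // sq_ge0. Qed.
Lemma sqD u v : sq (u + v) = sq u + 2 * dotv u v + sq v.
Proof. rewrite /sq !dotvDl !dotvDr (dotvC v u); ring. Qed.
Lemma sqB u v : sq (u - v) = sq u - 2 * dotv u v + sq v.
Proof. rewrite /sq !dotvDl !dotvDr !dotvNl !dotvNr (dotvC v u); ring. Qed.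
Lemma sqZ c u : sq (c *: u) = c ^+ 2 * sq u.
Proof. by rewrite /sq dotvZl dotvZr mulrA expr2. Qed.
Lemma sqN u : sq (- u) = sq u.
Proof. by rewrite /sq dotvNl dotvNr opprK. Qed.

Lemma young u v c : 0 < c -> 2 * dotv u v <= c * sq u + c^-1 * sq v.
Proof.
move=> c0; have := sq_ge0 (c *: u - v); rewrite sqB sqZ dotvZl => h.
have : 0 <= c^-1 * (c ^+ 2 * sq u - 2 * (c * dotv u v) + sq v).
  by rewrite mulr_ge0 // invr_ge0 ltW.
have cV : c^-1 * c = 1 by rewrite mulVf // gt_eqF.
have -> : c^-1 * (c ^+ 2 * sq u - 2 * (c * dotv u v) + sq v)
   = (c^-1 * c) * (c * sq u) - (c^-1 * c) * (2 * dotv u v) + c^-1 * sq v by ring.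
rewrite cV !mul1r; lra.
Qed.

Lemma sqD_le u v c : 0 < c -> sq (u + v) <= (1 + c) * sq u + (1 + c^-1) * sq v.
Proof. move=> c0; have := young u v c c0; rewrite sqD; lra. Qed.

Lemma abs_dotv u v : `|dotv u v| <= sq u + sq v.
Proof.
have h1 := young u v 1 ltr01; have h2 := young u (- v) 1 ltr01.
rewrite dotvNr sqN invr1 in h2; rewrite invr1 in h1.
have := sq_ge0 u; have := sq_ge0 v.
case: (lerP 0 (dotv u v)) => h; [rewrite ger0_norm // | rewrite ltr0_norm //]; lra.
Qed.

Lemma ndotv_le u v : - dotv u v <= 4^-1 * sq u + sq v.
Proof.
have h := young u (- v) (2^-1) (ltac:(by rewrite invr_gt0)).
rewrite dotvNr sqN invrK in h.
have -> : (4 : R)^-1 = 2^-1 * 2^-1 by rewrite -invfM; congr (_^-1); lra.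
lra.
Qed.

Lemma sum_cst_seq I (r : seq I) (c : R) : \sum_(i <- r) c = c *+ size r.
Proof. by elim: r => [|a r IH]; rewrite ?big_nil ?big_cons ?IH ?mulrS. Qed.

Lemma sq_sum I (r : seq I) (F : I -> 'rV[R]_d) :
  sq (\sum_(i <- r) F i) <= (size r)%:R * \sum_(i <- r) sq (F i).
Proof.
have E1 : sq (\sum_(i <- r) F i) = \sum_(i <- r) \sum_(j <- r) dotv (F i) (F j).
  by rewrite /sq dotv_suml; apply: eq_bigr => i _; rewrite dotv_sumr.
have E2 : forall i j, 2 * dotv (F i) (F j) <= sq (F i) + sq (F j).
  by move=> i j; have := young (F i) (F j) 1 ltr01; rewrite invr1 !mul1r.
have E3 : 2 * sq (\sum_(i <- r) F i) <= \sum_(i <- r) \sum_(j <- r) (sq (F i) + sq (F j)).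
  rewrite E1 mulr_sumr; apply: ler_sum => i _; rewrite mulr_sumr.
  by apply: ler_sum => j _; exact: E2.
have E4 : \sum_(i <- r) \sum_(j <- r) (sq (F i) + sq (F j))
   = 2 * ((size r)%:R * \sum_(i <- r) sq (F i)).
  under eq_bigr do rewrite big_split /= sum_cst_seq -mulr_natl.
  rewrite big_split /= -mulr_sumr sum_cst_seq -mulr_natl; ring.
lra.
Qed.

Lemma coord_sq u j : u 0 j ^+ 2 <= sq u.
Proof.
rewrite /sq /dotv (bigD1 j) //= -expr2 lerDl.
by apply: sumr_ge0 => k _; rewrite -expr2 sqr_ge0.
Qed.

Lemma coord_le u j : `|u 0 j| <= enorm u.
Proof.
rewrite -(@ler_pXn2r _ 2) //= ?nnegrE ?sqrtr_ge0 //.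
by rewrite enorm_sq real_normK ?num_real // coord_sq.
Qed.

Lemma lip_sq (g : 'rV[R]_d -> 'rV[R]_d) L x y :
  enorm (g x - g y) <= L * enorm (x - y) -> sq (g x - g y) <= L ^+ 2 * sq (x - y).
Proof.
move=> h; rewrite -!enorm_sq -exprMn.
rewrite ler_pXn2r ?nnegrE ?sqrtr_ge0 //; exact: le_trans (sqrtr_ge0 _) h.
Qed.

Lemma enorm_ge0 u : 0 <= enorm u.
Proof. exact: sqrtr_ge0. Qed.

Lemma enorm_le u e : 0 <= e -> sq u <= e ^+ 2 -> enorm u <= e.
Proof. by move=> e0 h; rewrite /enorm -(ger0_norm e0) -sqrtr_sqr; exact: ler_wsqrtr. Qed.

End Vec.


Lemma floor_approx {R : realType} (x c : R) : 0 < c ->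
  `|(Num.floor (c * x))%:~R / c - x| <= c^-1.
Proof.
move=> c0; have /andP[h1 h2] := floor_itv (c * x).
rewrite intrD in h2.
set F : R := (Num.floor (c * x))%:~R in h1 h2 *.
have ci0 : 0 < c^-1 by rewrite invr_gt0.
have hc : c * c^-1 = 1 by rewrite mulfV // gt_eqF.
have -> : F / c - x = (F - c * x) * c^-1.
  by rewrite mulrBl -mulrA [x * _]mulrC mulrA hc mul1r.
have u1 : F - c * x <= 0 by lra.
have u2 : -1 <= F - c * x by lra.
move: u1 u2; set u := F - c * x => u1 u2.
rewrite ler_norml; apply/andP; split; nra.
Qed.

Section Meas.
Context {R : realType} {dm : measure_display} {T : measurableType dm}.
Definition mr (f : T -> R) := measurable_fun setT f.
Definition mv {d} (X : T -> 'rV[R]_d) := forall j, mr (fun w => X w 0 j).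

Lemma mr_case (U : countType) (G : T -> U) (F : U -> T -> R) :
  (forall u, measurable [set w | G w = u]) -> (forall u, mr (F u)) ->
  mr (fun w => F (G w) w).
Proof.
move=> mG mF _ Y mY.
have -> : setT `&` (fun w => F (G w) w) @^-1` Y =
    \bigcup_u ([set w | G w = u] `&` (setT `&` F u @^-1` Y)).
  apply/seteqP; split => [w /= [_ Yw]|w [u _ [/= Gw [_ Yw]]]].
  - by exists (G w) => //.
  - by split => //=; rewrite Gw.
apply: countable_bigcupT_measurable; first exact: countableP.
by move=> u; apply: measurableI => //; exact: mF.
Qed.

Lemma mr_level (g : T -> R) (m : int) : mr g -> measurable [set w | Num.floor (g w) = m].
Proof.
move=> mg.
have := mg measurableT `[m%:~R, (m + 1)%:~R[%classic (measurable_itv _).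
congr measurable; apply/seteqP; split => w /=.
- by move=> [_]; rewrite /= in_itv /= -floor_eq => /eqP.
- by move=> h; split => //=; rewrite in_itv /= -floor_eq h.
Qed.

Lemma mv_lip d d' (g : 'rV[R]_d -> 'rV[R]_d') L (X : T -> 'rV[R]_d) :
  (forall x y, enorm (g x - g y) <= L * enorm (x - y)) -> mv X ->
  mv (fun w => g (X w)).
Proof.
move=> Lg mX j'.
pose Y k w : 'rV[R]_d := \row_j ((Num.floor (k.+1%:R * X w 0 j))%:~R / k.+1%:R).
apply: (@measurable_realfun.measurable_fun_cvg _ _ _ _ (fun k w => g (Y k w) 0 j')).
- move=> k.
  pose z w : {ffun 'I_d -> int} := [ffun j => Num.floor (k.+1%:R * X w 0 j)].
  pose V (c : {ffun 'I_d -> int}) : 'rV[R]_d := \row_j ((c j)%:~R / k.+1%:R).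
  have -> : (fun w => g (Y k w) 0 j') = (fun w => (fun c (_ : T) => g (V c) 0 j') (z w) w).
    by apply/funext => w /=; congr (g _ 0 j'); apply/rowP => j; rewrite !mxE ffunE.
  apply: (@mr_case _ z (fun c (_ : T) => g (V c) 0 j')) => [c|c]; last exact: measurable_cst.
  have -> : [set w | z w = c] =
      \bigcap_(j in setT) [set w | Num.floor (k.+1%:R * X w 0 j) = c j].
    apply/seteqP; split => w /=.
    - by move=> <- j _; rewrite ffunE.
    - by move=> h; apply/ffunP => j; rewrite ffunE h.
  apply: fin_bigcap_measurable; first exact: finite_finset.
  move=> j _; apply: mr_level; apply: measurable_realfun.measurable_funM; [exact: measurable_cst | exact: mX].
- move=> w _.
  set t := g (X w) 0 j'.
  have B k : `|g (Y k w) 0 j' - t| <= (`|L| * d%:R) * harmonic k.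
    have e1 : `|g (Y k w) 0 j' - t| <= enorm (g (Y k w) - g (X w)).
      by have := coord_le (g (Y k w) - g (X w)) j'; rewrite !mxE => h; exact: h.
    apply: (le_trans e1); apply: (le_trans (Lg _ _)).
    have en : enorm (Y k w - X w) <= d%:R * harmonic k.
      have hk : 0 < (k.+1%:R : R) by [].
      have cb : forall j, ((Y k w - X w) 0 j) ^+ 2 <= (harmonic k) ^+ 2.
        move=> j; rewrite !mxE -real_normK ?num_real // ler_pXn2r ?nnegrE ?harmonic_ge0 //.
        exact: floor_approx.
      have hd : 0 <= d%:R * harmonic k :> R by apply: mulr_ge0; [exact: ler0n | exact: harmonic_ge0].
      have he : 0 <= enorm (Y k w - X w) by exact: sqrtr_ge0.
      apply: enorm_le => //; rewrite /sq /dotv.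
      apply: (@le_trans _ _ (\sum_(j < d) (harmonic k) ^+ 2)).
        by apply: ler_sum => j _; rewrite -expr2; exact: cb.
      rewrite sumr_const card_ord exprMn -[harmonic k ^+ 2 *+ d]mulr_natl; apply: ler_wpM2r.
        exact: sqr_ge0.
      by rewrite -natrX ler_nat expnS expn1; case: (d) => // n; rewrite leq_pmulr.
    rewrite -mulrA; apply: (le_trans (ler_wpM2r _ (ler_norm L))).
      exact: sqrtr_ge0.
    by apply: ler_wpM2l.
  apply: (@squeeze_cvgr _ _ _ _ (fun k => t - (`|L| * d%:R) * harmonic k)
                              (fun k => t + (`|L| * d%:R) * harmonic k)).
  + apply: nearW => k; have := B k; rewrite ler_norml => /andP[b1 b2].
    by apply/andP; split; lra.
  + rewrite -[X in _ --> X](subr0 t) -[X in t - X](mulr0 (`|L| * d%:R)).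
    apply: (cvgB (f := fun _ => t) (g := fun k => `|L| * d%:R * harmonic k)).
      exact: cvg_cst.
    exact: (@cvgMl_tmp _ _ _ _ _ (`|L| * d%:R) _ (@cvg_harmonic R)).
  + rewrite -[X in _ --> X](addr0 t) -[X in t + X](mulr0 (`|L| * d%:R)).
    apply: (cvgD (f := fun _ => t) (g := fun k => `|L| * d%:R * harmonic k)).
      exact: cvg_cst.
    exact: (@cvgMl_tmp _ _ _ _ _ (`|L| * d%:R) _ (@cvg_harmonic R)).
Qed.

End Meas.


Lemma diff_sumE {R : realType} {d : nat} n (f : 'I_n -> 'rV[R]_d -> R) x :
  (forall i, differentiable (f i) x) ->
  forall v, 'd (\sum_(i < n) f i) x v = \sum_(i < n) 'd (f i) x v.
Proof.
elim: n f => [|n IH] f df v.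
  rewrite !big_ord0.
  have := @diff_cst R _ R^o (0 : R) x.
  by move=> /(congr1 (fun h => h v)) /= ->.
rewrite big_ord_recr /= diffD /=; last 2 first.
- by apply: differentiable_sum => i; exact: df.
- exact: df.
rewrite IH; last by move=> i; exact: df.
by rewrite [in RHS]big_ord_recr.
Qed.

Lemma dotv_delta {R : realType} {d : nat} (u : 'rV[R]_d) j :
  dotv u (delta_mx 0 j) = u 0 j.
Proof.
rewrite /dotv (bigD1 j) //= big1 ?addr0; first by rewrite mxE !eqxx mulr1.
by move=> k kj; rewrite mxE (negbTE kj) andbF mulr0.
Qed.

Lemma grad_avg {R : realType} {d : nat} n (f : 'I_n -> 'rV[R]_d -> R)
  (gradf : 'I_n -> 'rV[R]_d -> 'rV[R]_d) (gradF : 'rV[R]_d -> 'rV[R]_d) :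
  (forall i, is_gradient (f i) (gradf i)) ->
  is_gradient (fun x => (n%:R)^-1 * \sum_(i < n) f i x) gradF ->
  forall x, gradF x = (n%:R)^-1 *: \sum_(i < n) gradf i x.
Proof.
move=> hf hF x.
have EF : (fun x => (n%:R)^-1 * \sum_(i < n) f i x) = (n%:R)^-1 *: (\sum_(i < n) f i).
  by apply/funext => y; rewrite fct_sumE.
have df : forall i, differentiable (f i) x by move=> i; case: (hf i x).
have key : forall v, dotv (gradF x) v = (n%:R)^-1 * \sum_(i < n) dotv (gradf i x) v.
  move=> v; case: (hF x) => _ <-; rewrite EF diffZ /=; last first.
    exact: differentiable_sum.
  rewrite diff_sumE //; congr (_ * _); apply: eq_bigr => i _.
  by case: (hf i x) => _ ->.
apply/rowP => j; rewrite -dotv_delta key mxE summxE; congr (_ * _).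
by apply: eq_bigr => i _; rewrite dotv_delta.
Qed.


Section MeasB.
Context {R : realType} {dm : measure_display} {T : measurableType dm}.

Lemma mr_cst (c : R) : mr (fun _ : T => c).
Proof. exact: measurable_cst. Qed.
Lemma mrD (f g : T -> R) : mr f -> mr g -> mr (fun w => f w + g w).
Proof. exact: measurable_realfun.measurable_funD. Qed.
Lemma mrM (f g : T -> R) : mr f -> mr g -> mr (fun w => f w * g w).
Proof. exact: measurable_realfun.measurable_funM. Qed.
Lemma mrN (f : T -> R) : mr f -> mr (fun w => - f w).
Proof. exact: measurable_realfun.measurable_funN. Qed.
Lemma mrB (f g : T -> R) : mr f -> mr g -> mr (fun w => f w - g w).
Proof. by move=> hf hg; apply: mrD => //; exact: mrN. Qed.
Lemma mr_sumP I (r : seq I) (Q : pred I) (F : I -> T -> R) :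
  (forall i, mr (F i)) -> mr (fun w => \sum_(i <- r | Q i) F i w).
Proof.
move=> hF.
have -> : (fun w => \sum_(i <- r | Q i) F i w) =
   (fun w => \sum_(i <- r) (if Q i then F i w else 0)).
  by apply/funext => w; rewrite big_mkcond.
apply: measurable_sum => i; case: (Q i); [exact: hF | exact: mr_cst].
Qed.

Lemma mr_sum_in (I : eqType) (r : seq I) (F : I -> T -> R) :
  (forall i, i \in r -> mr (F i)) -> mr (fun w => \sum_(i <- r) F i w).
Proof.
move=> hF.
have -> : (fun w => \sum_(i <- r) F i w) =
   (fun w => \sum_(i <- r) (if i \in r then F i w else 0)).
  by apply/funext => w; rewrite -big_mkcond -big_seq.
apply: measurable_sum => i; case: (boolP (i \in r)) => h; [exact: hF | exact: mr_cst].
Qed.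

Lemma mv_cst {d} (c : 'rV[R]_d) : mv (fun _ : T => c).
Proof. by move=> j; exact: mr_cst. Qed.

Lemma mr_dotv {d} (u v : T -> 'rV[R]_d) : mv u -> mv v -> mr (fun w => dotv (u w) (v w)).
Proof. by move=> hu hv; apply: mr_sumP => j; apply: mrM. Qed.

Lemma mr_sq {d} (u : T -> 'rV[R]_d) : mv u -> mr (fun w => sq (u w)).
Proof. by move=> hu; exact: mr_dotv. Qed.

Lemma mvB {d} (u v : T -> 'rV[R]_d) : mv u -> mv v -> mv (fun w => u w - v w).
Proof.
move=> hu hv j.
have -> : (fun w => (u w - v w) 0 j) = (fun w => u w 0 j - v w 0 j).
  by apply/funext => w; rewrite !mxE.
exact: mrB.
Qed.

End MeasB.

Section Proc.
Context {R : realType} {dm : measure_display} {T : measurableType dm}.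
Variable P : probability T R.
Variables (n s K d : nat) (eta : R) (w0 : 'rV[R]_d).
Variables (S : nat -> T -> {set 'I_n}) (E : nat -> 'I_n -> T -> nat)
  (ht : nat -> 'I_n -> nat -> T -> 'rV[R]_d) (stoch : bool).
Hypothesis mS : forall t (B : {set 'I_n}), (0 < t)%N -> measurable [set w | S t w = B].
Hypothesis mE : forall t i k, (0 < t)%N -> measurable [set w | E t i w = k].
Hypothesis mht : forall t i q j, (0 < t)%N -> (0 < q)%N ->
     measurable_fun setT (fun w => ht t i q w 0 j).

Let alpha := alpha_of P K E stoch.

Lemma mv_ht t i q : (0 < t)%N -> (0 < q)%N -> mv (ht t i q).
Proof. by move=> t0 q0 j; exact: mht. Qed.

Lemma mv_hcheck t i : (0 < t)%N -> mv (fun w => hcheck K E ht alpha t i w).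
Proof.
move=> t0 j.
set a1 := fine (P [set w' | (0 < E t i w')%N]).
set a2 := fine ('E_P[fun w' => (minn (E t i w') K)%:R])%E.
pose F (k : nat) (w : T) : R := if (0 < k)%N then
   ((if stoch then a1 * (minn k K)%:R else a2)^-1 *
      \sum_(1 <= q < (minn k K).+1) ht t i q w 0 j) else 0.
have -> : (fun w => hcheck K E ht alpha t i w 0 j) = (fun w => F (E t i w) w).
  apply/funext => w; rewrite /hcheck /F /alpha /alpha_of.
  by case: ifP => _; rewrite !mxE ?summxE.
apply: (@mr_case _ _ _ nat (E t i) F) => [k|k]; first exact: mE.
rewrite /F; case: (0 < k)%N; last exact: mr_cst.
apply: mrM; first exact: mr_cst.
apply: mr_sum_in => q; rewrite mem_index_iota => /andP[q0 _].
exact: mht.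
Qed.

Lemma mv_state (t : nat) : mv (wsrv s K eta w0 S E ht alpha t) /\ forall i, mv (wloc s K eta w0 S E ht alpha t i).
Proof.
elim: t => [|t [IHs IHl]].
  by split => [|i] j; rewrite /wsrv /wloc /=; [|rewrite ffunE]; exact: mr_cst.
have hs : mv (wsrv s K eta w0 S E ht alpha t.+1).
  move=> j.
  pose F (B : {set 'I_n}) (w : T) : R := (s.+1%:R)^-1 *
     (wsrv s K eta w0 S E ht alpha t w 0 j + \sum_(i in B)
       (wloc s K eta w0 S E ht alpha t i w 0 j - eta * hcheck K E ht alpha t.+1 i w 0 j)).
  have -> : (fun w => wsrv s K eta w0 S E ht alpha t.+1 w 0 j) = (fun w => F (S t.+1 w) w).
    apply/funext => w; rewrite /F /wsrv /=.
    rewrite !mxE summxE; congr (_ * (_ + _)); apply: eq_bigr => i _.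
    by rewrite !mxE.
  apply: (@mr_case _ _ _ _ (S t.+1) F) => [B|B]; first exact: mS.
  apply: mrM; first exact: mr_cst.
  apply: mrD; first exact: IHs.
  apply: mr_sumP => i; apply: mrB; first exact: IHl.
  by apply: mrM; [exact: mr_cst | exact: mv_hcheck].
split => // i j.
pose F (B : {set 'I_n}) (w : T) : R := if i \in B then
   wsrv s K eta w0 S E ht alpha t.+1 w 0 j else wloc s K eta w0 S E ht alpha t i w 0 j.
have -> : (fun w => wloc s K eta w0 S E ht alpha t.+1 i w 0 j) = (fun w => F (S t.+1 w) w).
  by apply/funext => w; rewrite /F /wloc /wsrv /= ffunE; case: ifP.
apply: (@mr_case _ _ _ _ (S t.+1) F) => [B|B]; first exact: mS.
by rewrite /F; case: (i \in B); [exact: hs | exact: IHl].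
Qed.
Lemma mv_mu t : mv (mu s K eta w0 S E ht alpha t).
Proof.
have [hs hl] := mv_state t.
move=> j.
have -> : (fun w => mu s K eta w0 S E ht alpha t w 0 j) = (fun w => (n.+1%:R)^-1 *
   (wsrv s K eta w0 S E ht alpha t w 0 j + \sum_(i < n) wloc s K eta w0 S E ht alpha t i w 0 j)).
  by apply/funext => w; rewrite /mu !mxE summxE.
apply: mrM; first exact: mr_cst.
apply: mrD; first exact: hs.
by apply: mr_sumP => i; exact: hl.
Qed.

Lemma mv_query t i q : mv (query s K eta w0 S E ht alpha t.+1 i q).
Proof.
have [hs hl] := mv_state t.
move=> j.
have -> : (fun w => query s K eta w0 S E ht alpha t.+1 i q w 0 j) = (fun w =>
   wloc s K eta w0 S E ht alpha t i w 0 j - eta * \sum_(1 <= r < q) ht t.+1 i r w 0 j).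
  by apply/funext => w; rewrite /query /= !mxE summxE.
apply: mrB; first exact: hl.
apply: mrM; first exact: mr_cst.
apply: mr_sum_in => r; rewrite mem_index_iota => /andP[r0 _].
exact: mht.
Qed.

End Proc.


Lemma sum_iota_ge0 {R : realType} (F : nat -> R) a b :
  (forall p, 0 <= F p) -> 0 <= \sum_(a <= p < b) F p.
Proof. by move=> h; apply: sumr_ge0 => p _. Qed.

Lemma main_pointwise {R : realType} {d : nat} (g : 'rV[R]_d -> 'rV[R]_d)
  (L eta : R) (K q : nat) (a mu Wv : 'rV[R]_d) (h x : nat -> 'rV[R]_d) :
  0 <= L -> 0 <= eta -> eta ^+ 2 * L ^+ 2 * K%:R ^+ 2 <= 16^-1 ->
  (forall x y, sq (g x - g y) <= L ^+ 2 * sq (x - y)) ->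
  (1 <= q <= K)%N ->
  (forall r, x r = Wv - eta *: \sum_(1 <= p < r) h p) ->
  - dotv a (g (x q)) <= 4^-1 * sq a + 6 * L ^+ 2 * sq (Wv - mu)
     + 4 * L ^+ 2 * eta ^+ 2 * (K%:R - 1) * \sum_(1 <= p < q) sq (h p - g (x p))
     + 8 * L ^+ 2 * eta ^+ 2 * K%:R ^+ 2 * sq (g mu) - dotv a (g mu).
Proof.
move=> L0 eta0 hsmall Lg /andP[q1 qK] hx.
set A := sq (Wv - mu).
set G := sq (g mu).
set Xi := \sum_(1 <= p < q) sq (h p - g (x p)).
set e2 := eta ^+ 2.
set L2 := L ^+ 2.
set k := K%:R : R.
set Bnd := 6 * A + 4 * e2 * (k - 1) * Xi + 8 * e2 * k ^+ 2 * G.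
have A0 : 0 <= A by exact: sq_ge0.
have G0 : 0 <= G by exact: sq_ge0.
have Xi0 : 0 <= Xi by apply: sum_iota_ge0 => p; exact: sq_ge0.
have e20 : 0 <= e2 by rewrite /e2 sqr_ge0.
have L20 : 0 <= L2 by rewrite /L2 sqr_ge0.
have k1 : 1 <= k by rewrite /k ler1n; exact: leq_trans qK.
have Bnd0 : 0 <= Bnd.
  rewrite /Bnd; have h1 : 0 <= e2 * (k - 1) * Xi by rewrite !mulr_ge0 // subr_ge0.
  have h2 : 0 <= e2 * k ^+ 2 * G by rewrite !mulr_ge0 // sqr_ge0.
  lra.
have step : forall r, (1 <= r <= q)%N ->
    (forall p, (1 <= p < r)%N -> sq (x p - mu) <= Bnd) -> sq (x r - mu) <= Bnd.
  move=> r /andP[r1 rq] IH.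
  set hs := \sum_(1 <= p < r) h p.
  set m : R := (r - 1)%:R.
  have m0 : 0 <= m by rewrite /m ler0n.
  have mk : m <= k - 1.
    rewrite /m /k natrB // lerD2r ler_nat; exact: leq_trans rq qK.
  have e1 : x r - mu = (Wv - mu) + (- eta) *: hs.
    by rewrite hx -/hs scaleNr addrAC.
  have s1 : sq (x r - mu) <= 4 * A + (4 / 3) * (e2 * sq hs).
    rewrite e1; apply: (le_trans (sqD_le _ _ _ (ltr0Sn R 2))).
    rewrite sqZ sqrrN -/e2 -/A.
    have -> : (1 + (2.+1%:R : R)^-1) = 4 / 3.
      by apply: (@mulIf _ 3); [rewrite pnatr_eq0 | rewrite mulfVK ?pnatr_eq0 //; lra].
    have -> : (1 + (2.+1%:R : R)) = 4 by lra.
    by [].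
  have s2 : sq hs <= m * \sum_(1 <= p < r) sq (h p).
    rewrite /hs /index_iota; apply: (le_trans (sq_sum _ _ _)).
    by rewrite size_iota /m.
  have s3 : forall p, (1 <= p < r)%N ->
      sq (h p) <= 2 * sq (h p - g (x p)) + 4 * G + 4 * L2 * Bnd.
    move=> p /andP[p1 pr].
    have hp : h p = (h p - g (x p)) + (g mu + (g (x p) - g mu)).
      by rewrite [g mu + _]addrC !subrK.
    have t1 := sqD_le (h p - g (x p)) (g mu + (g (x p) - g mu)) 1 ltr01.
    have t2 := sqD_le (g mu) (g (x p) - g mu) 1 ltr01.
    have t3 := Lg (x p) mu.
    have t4 := IH p (ltac:(by rewrite p1 pr)).
    rewrite -hp invr1 in t1; rewrite invr1 -/G in t2.
    have t5 : L2 * sq (x p - mu) <= L2 * Bnd by apply: ler_wpM2l.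
    rewrite -/L2 in t3.
    have := sq_ge0 (h p - g (x p)); lra.
  have s4 : \sum_(1 <= p < r) sq (h p) <=
      2 * \sum_(1 <= p < r) sq (h p - g (x p)) + m * (4 * G + 4 * L2 * Bnd).
    apply: (le_trans (y := \sum_(1 <= p < r) (2 * sq (h p - g (x p)) + (4 * G + 4 * L2 * Bnd)))).
      rewrite big_seq_cond [X in _ <= X]big_seq_cond; apply: ler_sum => p.
      rewrite mem_index_iota andbT => hp; have := s3 p hp; lra.
    by rewrite big_split /= -mulr_sumr sumr_const_nat /m !mulr_natl.
  have s5 : \sum_(1 <= p < r) sq (h p - g (x p)) <= Xi.
    rewrite /Xi [X in _ <= X](big_cat_nat (n := r)) //= lerDl.
    by apply: sum_iota_ge0 => p; exact: sq_ge0.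
  set Xr := \sum_(1 <= p < r) sq (h p - g (x p)) in s4 s5.
  set Hr := \sum_(1 <= p < r) sq (h p) in s2 s4.
  have Xr0 : 0 <= Xr by apply: sum_iota_ge0 => p; exact: sq_ge0.
  have P1 : e2 * m * Xr <= e2 * (k - 1) * Xi.
    by rewrite -[e2 * m * Xr]mulrA -[e2 * (k - 1) * Xi]mulrA; apply: ler_wpM2l => //; apply: ler_pM.
  have mm : m * m <= k ^+ 2.
    rewrite expr2; apply: ler_pM => //; lra.
  have P2 : e2 * (m * m) * G <= e2 * k ^+ 2 * G.
    by apply: ler_wpM2r => //; apply: ler_wpM2l.
  have P3 : e2 * (m * m) * L2 * Bnd <= 16^-1 * Bnd.
    apply: ler_wpM2r => //; apply: le_trans hsmall.
    rewrite -/e2 -/L2 -/k.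
    have -> : e2 * (m * m) * L2 = (e2 * L2) * (m * m) by ring.
    by apply: ler_wpM2l => //; exact: mulr_ge0.
  have s6 : e2 * sq hs <= e2 * (m * Hr) by apply: ler_wpM2l.
  have s7 : e2 * (m * Hr) <= e2 * (m * (2 * Xr + m * (4 * G + 4 * L2 * Bnd))).
    by apply: ler_wpM2l => //; apply: ler_wpM2l.
  have E7 : e2 * (m * (2 * Xr + m * (4 * G + 4 * L2 * Bnd))) =
    2 * (e2 * m * Xr) + 4 * (e2 * (m * m) * G) + 4 * (e2 * (m * m) * L2 * Bnd) by ring.
  rewrite E7 in s7.
  move: s1 s6 s7 P1 P2 P3; rewrite /Bnd; lra.
have hq : sq (x q - mu) <= Bnd.
  have : forall r, (r <= q)%N -> forall p, (1 <= p <= r)%N -> sq (x p - mu) <= Bnd.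
    elim => [|r IHr] rq p /andP[p1 pr]; first by case: p p1 pr.
    rewrite leq_eqVlt in pr; case/orP: pr => [/eqP -> | pr].
      apply: step; first by rewrite rq andbT.
      move=> p' /andP[p'1 p'r]; apply: IHr; first exact: ltnW.
      by rewrite p'1 -ltnS.
    by apply: IHr; [exact: ltnW | rewrite p1 -ltnS].
  by move=> /(_ q (leqnn q) q); rewrite q1 leqnn; apply.
have f1 : - dotv a (g (x q)) = - dotv a (g mu) + - dotv a (g (x q) - g mu).
  by rewrite dotvBr; ring.
have f2 := ndotv_le a (g (x q) - g mu).
have f3 := Lg (x q) mu.
have f4 : L2 * sq (x q - mu) <= L2 * Bnd by apply: ler_wpM2l.
rewrite -/L2 in f3.
rewrite f1; move: f2 f3 f4; rewrite /Bnd; lra.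
Qed.


Section Expect.
Context {R : realType} {dm : measure_display} {T : measurableType dm}.
Variable P : probability T R.

Definition intg (f : T -> R) := P.-integrable setT (EFin \o f).
Definition RI (f : T -> R) := (\int[P]_w f w)%R.

Lemma expE f : intg f -> ('E_P[f] = (RI f)%:E)%E.
Proof.
by move=> hf; rewrite unlock /RI /Rintegral fineK //; exact: integrable_fin_num.
Qed.

Lemma int_mr f : intg f -> mr f.
Proof. by move=> /integrableP[/measurable_realfun.measurable_EFinP]. Qed.

Lemma int_le f g : mr f -> intg g -> (forall w, `|f w| <= g w) -> intg f.
Proof.
move=> mf ig fg.
apply: (@le_integrable _ _ _ _ _ measurableT (EFin \o f) (EFin \o g)) => //.
  exact/measurable_realfun.measurable_EFinP.
move=> w _ /=; rewrite ?abse_EFin lee_fin; apply: (le_trans (fg w)).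
exact: ler_norm.
Qed.

Lemma int_add f g : intg f -> intg g -> intg (fun w => f w + g w).
Proof.
move=> hf hg; have := integrableD measurableT hf hg.
by apply: eq_integrable => // w _ /=; rewrite EFinD.
Qed.

Lemma int_scale (c : R) f : intg f -> intg (fun w => c * f w).
Proof.
move=> hf; have := integrableZl measurableT c hf.
by apply: eq_integrable => // w _ /=; rewrite EFinM.
Qed.

Lemma int_opp f : intg f -> intg (fun w => - f w).
Proof.
move=> hf; have := int_scale (-1) f hf.
by apply: eq_integrable => // w _ /=; rewrite mulN1r.
Qed.

Lemma int_cst (c : R) : intg (fun _ => c).
Proof. exact: finite_measure_integrable_cst. Qed.

Lemma int_sum (I : eqType) (r : seq I) (F : I -> T -> R) :
  (forall i, i \in r -> intg (F i)) -> intg (fun w => \sum_(i <- r) F i w).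
Proof.
elim: r => [|a r IH] hF.
  have := int_cst 0; apply: eq_integrable => // w _ /=; by rewrite big_nil.
have h2 : intg (fun w => F a w + \sum_(i <- r) F i w).
  apply: int_add; first by apply: hF; rewrite mem_head.
  by apply: IH => i ir; apply: hF; rewrite in_cons ir orbT.
by apply: eq_integrable h2 => // w _ /=; rewrite big_cons.
Qed.

Lemma RI_add f g : intg f -> intg g -> RI (fun w => f w + g w) = RI f + RI g.
Proof. by move=> hf hg; rewrite /RI RintegralD. Qed.

Lemma RI_scale c f : intg f -> RI (fun w => c * f w) = c * RI f.
Proof. by move=> hf; rewrite /RI RintegralZl. Qed.

Lemma RI_opp f : intg f -> RI (fun w => - f w) = - RI f.
Proof.
move=> hf; have -> : (fun w => - f w) = (fun w => -1 * f w).
  by apply/funext => w; rewrite mulN1r.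
by rewrite RI_scale // mulN1r.
Qed.

Lemma RI_sum (I : eqType) (r : seq I) (F : I -> T -> R) :
  (forall i, i \in r -> intg (F i)) ->
  RI (fun w => \sum_(i <- r) F i w) = \sum_(i <- r) RI (F i).
Proof.
elim: r => [|a r IH] hF.
  rewrite big_nil /RI.
  have -> : (fun w : T => \sum_(i <- [::]) F i w) = (fun _ => 0).
    by apply/funext => w; rewrite big_nil.
  by rewrite Rintegral_cst //= mul0r.
rewrite big_cons -IH; last by move=> i ir; apply: hF; rewrite in_cons ir orbT.
have -> : (fun w => \sum_(i <- (a :: r)) F i w) =
          (fun w => F a w + \sum_(i <- r) F i w).
  by apply/funext => w; rewrite big_cons.
rewrite RI_add //; first by apply: hF; rewrite mem_head.
by apply: int_sum => i ir; apply: hF; rewrite in_cons ir orbT.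
Qed.

Lemma RI_le f g : intg f -> intg g -> (forall w, f w <= g w) -> RI f <= RI g.
Proof. by move=> hf hg fg; apply: le_Rintegral. Qed.

Lemma RI_ge0 f : (forall w, 0 <= f w) -> 0 <= RI f.
Proof. by move=> h; apply: Rintegral_ge0. Qed.

End Expect.


Lemma size_enum_I n : size (index_enum 'I_n) = n.
Proof. by rewrite /index_enum -enumT -cardT card_ord. Qed.

Lemma lip_bound {R : realType} {d : nat} (g : 'rV[R]_d -> 'rV[R]_d) L v :
  (forall x y, enorm (g x - g y) <= L * enorm (x - y)) ->
  sq (g v) <= 2 * sq (g 0) + 2 * L ^+ 2 * sq v.
Proof.
move=> hg.
have e : g v = g 0 + (g v - g 0) by rewrite addrC subrK.
have h1 := sqD_le (g 0) (g v - g 0) 1 ltr01.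
have h2 := @lip_sq _ _ g L v 0 (hg v 0); rewrite subr0 in h2.
rewrite -e invr1 in h1; lra.
Qed.

Lemma sq_sub_le {R : realType} {d : nat} (u v : 'rV[R]_d) :
  sq (u - v) <= 2 * sq u + 2 * sq v.
Proof. by have := sqD_le u (- v) 1 ltr01; rewrite sqN invr1; lra. Qed.

Lemma lipF {R : realType} {d : nat} n (gradf : 'I_n -> 'rV[R]_d -> 'rV[R]_d)
  (gradF : 'rV[R]_d -> 'rV[R]_d) L :
  (0 < n)%N -> 0 <= L ->
  (forall x, gradF x = (n%:R)^-1 *: \sum_(i < n) gradf i x) ->
  (forall i x y, enorm (gradf i x - gradf i y) <= L * enorm (x - y)) ->
  forall x y, enorm (gradF x - gradF y) <= L * enorm (x - y).
Proof.
move=> n0 L0 hF hL x y.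
apply: enorm_le; first by apply: mulr_ge0 => //; exact: enorm_ge0.
rewrite exprMn enorm_sq !hF -scalerBr -sumrB sqZ.
have h1 := @sq_sum _ _ 'I_n (index_enum 'I_n) (fun i => gradf i x - gradf i y).
rewrite size_enum_I in h1.
have h2 : \sum_(i <- index_enum 'I_n) sq (gradf i x - gradf i y) <= n%:R * (L ^+ 2 * sq (x - y)).
  apply: (le_trans (y := \sum_(i < n) L ^+ 2 * sq (x - y))).
    by apply: ler_sum => i _; exact: lip_sq.
  by rewrite sumr_const card_ord mulr_natl.
have np : 0 < (n%:R : R) by rewrite ltr0n.
have ni : (n%:R : R)^-1 * n%:R = 1 by rewrite mulVf // gt_eqF.
set S1 := sq _ in h1 *.
set S2 := \sum_(i <- _) _ in h1 h2.
set c := (n%:R : R)^-1 in ni *.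
have c0 : 0 <= c by rewrite /c invr_ge0 ltW.
have B := sq_ge0 (x - y).
have : c ^+ 2 * S1 <= c ^+ 2 * (n%:R * (n%:R * (L ^+ 2 * sq (x - y)))).
  apply: ler_wpM2l; first exact: sqr_ge0.
  apply: (le_trans h1); apply: ler_wpM2l => //; exact: ltW.
suff -> : c ^+ 2 * (n%:R * (n%:R * (L ^+ 2 * sq (x - y)))) = L ^+ 2 * sq (x - y) by [].
rewrite expr2.
have -> : c * c * (n%:R * (n%:R * (L ^+ 2 * sq (x - y)))) =
  (c * n%:R) * (c * n%:R) * (L ^+ 2 * sq (x - y)) by ring.
by rewrite ni !mul1r.
Qed.

Theorem mainTheorem8 (R : realType) (dm : measure_display)
  (T : measurableType dm) (P : probability T R)
  (n s K d : nat) (eta L sigma : R)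
  (f : 'I_n -> 'rV[R]_d -> R) (gradf : 'I_n -> 'rV[R]_d -> 'rV[R]_d)
  (gradF : 'rV[R]_d -> 'rV[R]_d) (w0 : 'rV[R]_d)
  (S : nat -> T -> {set 'I_n}) (E : nat -> 'I_n -> T -> nat)
  (ht : nat -> 'I_n -> nat -> T -> 'rV[R]_d) (stoch : bool) :
  let alpha := alpha_of P K E stoch in
  let W := wloc s K eta w0 S E ht alpha in
  let M := mu s K eta w0 S E ht alpha in
  let X := query s K eta w0 S E ht alpha in
  let noise t i q w := ht t i q w - gradf i (X t i q w) in
  (* parameters *)
  (1 <= n)%N -> (1 <= s <= n)%N -> (1 <= K)%N -> (1 <= d)%N -> 0 < eta ->
  (* f_i differentiable with gradient gradf i; gradF is the gradient of f *)
  (forall i, is_gradient (f i) (gradf i)) ->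
  is_gradient (fun x => (n%:R)^-1 * \sum_(i < n) f i x) gradF ->
  (* smoothness *)
  0 < L ->
  (forall i x y, enorm (gradf i x - gradf i y) <= L * enorm (x - y)) ->
  (* step size *)
  eta < (4 * L * (K%:R) ^+ 2)^-1 -> eta < (2 * L * K%:R)^-1 ->
  (* measurability of the primitive random variables *)
  (forall t (B : {set 'I_n}), (0 < t)%N -> measurable [set w | S t w = B]) ->
  (forall t i k, (0 < t)%N -> measurable [set w | E t i w = k]) ->
  (forall t i q j, (0 < t)%N -> (0 < q)%N ->
     measurable_fun setT (fun w => ht t i q w 0 j)) ->
  (* S_t uniform among subsets of size s *)
  (forall t (B : {set 'I_n}), (0 < t)%N ->
     P [set w | S t w = B] = (if #|B| == s then ('C(n, s)%:R)^-1 else 0)%:E) ->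
  (* P(E^i_t > 0) > 0 *)
  (forall t i, (0 < t)%N -> (0 < P [set w | (0 < E t i w)%N])%E) ->
  (* (S_t, E_t) independent of the past up to t-1 and of all \tilde h_{t,q} *)
  (forall t, (0 < t)%N ->
     indep P <<s ev_set (S t) `|` E_events E t >>
             <<s past_events S E ht t `|` round_events ht t >>) ->
  (* S_t independent of (E^i_t)_i *)
  (forall t, (0 < t)%N -> indep P <<s ev_set (S t) >> <<s E_events E t >>) ->
  (* stochastic gradient oracle: conditionally on everything generated before
     the query, the noise has mean zero and second moment <= sigma^2 *)
  (forall t i q, (0 < t)%N -> (0 < q)%N ->
     cond_mean_zero P <<s past_events S E ht t `|` own_events ht t i q >>
                    (noise t i q) /\
     cond_sqnorm_le P <<s past_events S E ht t `|` own_events ht t i q >>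
                    (noise t i q) sigma) ->
  (* all expectations finite *)
  (forall t, P.-integrable setT
     (fun w => (enorm (wsrv s K eta w0 S E ht alpha t w) ^+ 2)%:E)) ->
  (forall t i, P.-integrable setT (fun w => (enorm (W t i w) ^+ 2)%:E)) ->
  (forall t i q, (0 < t)%N -> (0 < q)%N ->
     P.-integrable setT (fun w => (enorm (ht t i q w) ^+ 2)%:E)) ->
  (* conclusion *)
  forall (i : 'I_n) (t q : nat), (1 <= q <= K)%N ->
  ('E_P[fun w => (- dotv (gradF (M t w)) (gradf i (X t.+1 i q w)))%R]
   <= 'E_P[fun w => (enorm (gradF (M t w)) ^+ 2)%R] * (4^-1)%:E
      + ((4 * L ^+ 2 * eta ^+ 2 * (K%:R) ^+ 2 * sigma ^+ 2)%:E
         + (20 * L ^+ 2)%:E * 'E_P[fun w => (enorm (W t i w - M t w) ^+ 2)%R]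
         + (16 * L ^+ 2 * eta ^+ 2 * (K%:R) ^+ 2)%:E
             * 'E_P[fun w => (enorm (gradf i (M t w)) ^+ 2)%R])
      - 'E_P[fun w => dotv (gradF (M t w)) (gradf i (M t w))])%E.
Proof.
move=> alpha W M X noise hn /andP[hs1 hsn] hK hd heta hgf hgF hL hLip heta1 heta2
  mS mE mht hunif hpos hind1 hind2 hnoise hisrv hiW hiht i t q /andP[q1 qK].
have L0 : 0 <= L by exact: ltW.
have gFE := @grad_avg _ _ n f gradf gradF hgf hgF.
have LipF := @lipF _ _ n gradf gradF L hn L0 gFE hLip.
have Lsq : forall x y, sq (gradf i x - gradf i y) <= L ^+ 2 * sq (x - y).
  by move=> x y; exact: lip_sq.
set k : R := K%:R.
have k1 : 1 <= k by rewrite /k ler1n.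
have hsmall : eta ^+ 2 * L ^+ 2 * k ^+ 2 <= 16^-1.
  have kp : 0 < k by lra.
  have c0 : 0 < 4 * L * k ^+ 2.
    by apply: mulr_gt0; [apply: mulr_gt0 => //; lra | exact: exprn_gt0].
  have h1 : eta * (4 * L * k ^+ 2) < 1.
    by move: heta1; rewrite -div1r ltr_pdivlMr.
  have e0 : 0 <= eta * L * k.
    by apply: mulr_ge0; [apply: mulr_ge0; exact: ltW | exact: ltW].
  have h2 : 4 * (eta * L * k) < 1.
    have : eta * L * k <= eta * L * k * k by rewrite ler_peMr.
    have ee : eta * (4 * L * k ^+ 2) = 4 * (eta * L * k * k) by ring.
    rewrite ee in h1.
    lra.
  have -> : eta ^+ 2 * L ^+ 2 * k ^+ 2 = (eta * L * k) ^+ 2 by ring.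
  rewrite expr2; nra.
have [mvsrv mvW] := mv_state P n s K d eta w0 S E ht stoch mS mE mht t.
have mvM := mv_mu P n s K d eta w0 S E ht stoch mS mE mht t.
have mvX := mv_query P n s K d eta w0 S E ht stoch mS mE mht t i q.
have mvgFM := @mv_lip _ _ _ d d _ L _ LipF mvM.
have mvgM := @mv_lip _ _ _ d d _ L _ (hLip i) mvM.
have mvgX := @mv_lip _ _ _ d d _ L _ (hLip i) mvX.
have intE : forall f g : T -> R, (forall w, f w = g w) -> intg P f -> intg P g.
  by move=> f0 g0 fg hf; apply: eq_integrable hf => // w _ /=; rewrite fg.
have nnorm : forall x : R, 0 <= x -> `|x| = x by move=> x x0; rewrite ger0_norm.
have iSrv : intg P (fun w => sq (wsrv s K eta w0 S E ht alpha t w)).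
  by apply: (intE _ _ _ (hisrv t)) => w; rewrite enorm_sq.
have iW : forall j, intg P (fun w => sq (W t j w)).
  by move=> j; apply: (intE _ _ _ (hiW t j)) => w; rewrite enorm_sq.
have iht : forall p, (0 < p)%N -> intg P (fun w => sq (ht t.+1 i p w)).
  by move=> p p0; apply: (intE _ _ _ (hiht t.+1 i p isT p0)) => w; rewrite enorm_sq.
have iXi : forall p, (0 < p)%N -> intg P (fun w => sq (noise t.+1 i p w)).
  move=> p p0; have [_ [h _]] := hnoise t.+1 i p isT p0.
  by apply: (intE _ _ _ h) => w; rewrite enorm_sq.
have iM : intg P (fun w => sq (M t w)).
  apply: (@int_le _ _ _ P _ (fun w => 2 * sq (wsrv s K eta w0 S E ht alpha t w)
            + 2 * (n%:R * \sum_(j <- index_enum 'I_n) sq (W t j w)))).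
  - exact: mr_sq.
  - apply: int_add; first exact: int_scale.
    apply: int_scale; apply: int_scale; apply: int_sum => j _; exact: iW.
  - move=> w; rewrite nnorm ?sq_ge0 // /M /mu sqZ.
    set u := wsrv _ _ _ _ _ _ _ _ _ _.
    set V := \sum_(j < n) _.
    have h1 := sqD_le u V 1 ltr01; rewrite invr1 in h1.
    have h2 := @sq_sum _ _ 'I_n (index_enum 'I_n) (fun j => W t j w).
    rewrite size_enum_I in h2.
    set c := (n.+1%:R : R)^-1.
    have c0 : 0 <= c by rewrite /c invr_ge0.
    have c1 : c <= 1 by rewrite /c invf_le1 ?ltr0n // ler1n.
    have c2 : c ^+ 2 <= 1 by exact: exprn_ile1.
    have := sq_ge0 (u + V); have := sq_ge0 u.
    rewrite -/V in h2 *; nra.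
have ia2 : intg P (fun w => sq (gradF (M t w))).
  apply: (@int_le _ _ _ P _ (fun w => 2 * sq (gradF 0) + 2 * L ^+ 2 * sq (M t w))).
  - exact: mr_sq.
  - by apply: int_add; [exact: int_cst | exact: int_scale].
  - by move=> w; rewrite nnorm ?sq_ge0 //; exact: lip_bound.
have iG : intg P (fun w => sq (gradf i (M t w))).
  apply: (@int_le _ _ _ P _ (fun w => 2 * sq (gradf i 0) + 2 * L ^+ 2 * sq (M t w))).
  - exact: mr_sq.
  - by apply: int_add; [exact: int_cst | exact: int_scale].
  - by move=> w; rewrite nnorm ?sq_ge0 //; exact: lip_bound.
have iA : intg P (fun w => sq (W t i w - M t w)).
  apply: (@int_le _ _ _ P _ (fun w => 2 * sq (W t i w) + 2 * sq (M t w))).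
  - by apply: mr_sq; apply: mvB.
  - by apply: int_add; apply: int_scale.
  - by move=> w; rewrite nnorm ?sq_ge0 //; exact: sq_sub_le.
have iD : intg P (fun w => dotv (gradF (M t w)) (gradf i (M t w))).
  apply: (@int_le _ _ _ P _ (fun w => sq (gradF (M t w)) + sq (gradf i (M t w)))).
  - exact: mr_dotv.
  - exact: int_add.
  - by move=> w; exact: abs_dotv.
have iX : intg P (fun w => sq (X t.+1 i q w)).
  apply: (@int_le _ _ _ P _ (fun w => 2 * sq (W t i w) + (2 * eta ^+ 2 * (q - 1)%:R) *
        \sum_(p <- index_iota 1 q) sq (ht t.+1 i p w))).
  - exact: mr_sq.
  - apply: int_add; first exact: int_scale.
    apply: int_scale; apply: int_sum => p; rewrite mem_index_iota => /andP[p0 _].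
    exact: iht.
  - move=> w; rewrite nnorm ?sq_ge0 //.
    have -> : X t.+1 i q w = W t i w - eta *: \sum_(1 <= p < q) ht t.+1 i p w by [].
    apply: (le_trans (sq_sub_le _ _)); rewrite sqZ.
    have h2 := @sq_sum _ _ nat (index_iota 1 q) (fun p => ht t.+1 i p w).
    rewrite size_iota in h2.
    have e0 : 0 <= eta ^+ 2 by exact: sqr_ge0.
    have : eta ^+ 2 * sq (\sum_(1 <= p < q) ht t.+1 i p w) <=
        eta ^+ 2 * ((q - 1)%:R * \sum_(p <- index_iota 1 q) sq (ht t.+1 i p w)).
      by apply: ler_wpM2l.
    lra.
have igX : intg P (fun w => sq (gradf i (X t.+1 i q w))).
  apply: (@int_le _ _ _ P _ (fun w => 2 * sq (gradf i 0) + 2 * L ^+ 2 * sq (X t.+1 i q w))).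
  - exact: mr_sq.
  - by apply: int_add; [exact: int_cst | exact: int_scale].
  - by move=> w; rewrite nnorm ?sq_ge0 //; exact: lip_bound.
have iY : intg P (fun w => - dotv (gradF (M t w)) (gradf i (X t.+1 i q w))).
  apply: (@int_le _ _ _ P _ (fun w => sq (gradF (M t w)) + sq (gradf i (X t.+1 i q w)))).
  - by apply: mrN; exact: mr_dotv.
  - exact: int_add.
  - by move=> w; rewrite normrN; exact: abs_dotv.
set c1 := 4 * L ^+ 2 * eta ^+ 2 * (k - 1).
set c2 := 8 * L ^+ 2 * eta ^+ 2 * k ^+ 2.
pose z1 w := 4^-1 * sq (gradF (M t w)).
pose z2 w := 6 * L ^+ 2 * sq (W t i w - M t w).
pose z3 w := c1 * \sum_(1 <= p < q) sq (noise t.+1 i p w).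
pose z4 w := c2 * sq (gradf i (M t w)).
pose z5 w := - dotv (gradF (M t w)) (gradf i (M t w)).
have hpt : forall w, - dotv (gradF (M t w)) (gradf i (X t.+1 i q w)) <=
    z1 w + z2 w + z3 w + z4 w + z5 w.
  move=> w.
  exact: (@main_pointwise _ _ (gradf i) L eta K q (gradF (M t w)) (M t w) (W t i w)
    (fun p => ht t.+1 i p w) (fun r => X t.+1 i r w) L0 (ltW heta) hsmall Lsq
    (ltac:(by rewrite q1 qK)) (fun r => erefl)).
have i1 : intg P z1 by exact: int_scale.
have i2 : intg P z2 by exact: int_scale.
have iS : intg P (fun w => \sum_(1 <= p < q) sq (noise t.+1 i p w)).
  by apply: int_sum => p; rewrite mem_index_iota => /andP[p0 _]; exact: iXi.
have i3 : intg P z3 by exact: int_scale.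
have i4 : intg P z4 by exact: int_scale.
have i5 : intg P z5 by exact: int_opp.
have i12 : intg P (fun w => z1 w + z2 w) by exact: int_add.
have i123 : intg P (fun w => z1 w + z2 w + z3 w) by exact: int_add.
have i1234 : intg P (fun w => z1 w + z2 w + z3 w + z4 w) by exact: int_add.
have i12345 : intg P (fun w => z1 w + z2 w + z3 w + z4 w + z5 w) by exact: int_add.
have hRY := @RI_le _ _ _ P _ _ iY i12345 hpt.
rewrite (RI_add P (fun w => z1 w + z2 w + z3 w + z4 w) z5) // in hRY.
rewrite (RI_add P (fun w => z1 w + z2 w + z3 w) z4) // in hRY.
rewrite (RI_add P (fun w => z1 w + z2 w) z3) // in hRY.
rewrite (RI_add P z1 z2) // in hRY.
rewrite /z1 /z2 /z3 /z4 /z5 !RI_scale // in hRY.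
rewrite (RI_opp P (fun w => dotv (gradF (M t w)) (gradf i (M t w))) iD) in hRY.
rewrite (@RI_sum _ _ _ P nat (index_iota 1 q) (fun p w => sq (noise t.+1 i p w))) in hRY;
  last by move=> p; rewrite mem_index_iota => /andP[p0 _]; exact: iXi.
have hvar : forall p, (0 < p)%N -> RI P (fun w => sq (noise t.+1 i p w)) <= sigma ^+ 2.
  move=> p p0; have [_ [_ H]] := hnoise t.+1 i p isT p0.
  set G := past_events S E ht t.+1 `|` own_events ht t.+1 i p.
  have FT : <<s G >> setT.
    have [F0 FC _] := @smallest_sigma_algebra _ setT G.
    by have := FC set0 F0; rewrite setD0.
  have := H setT FT; rewrite probability_setT mule1.
  have -> : (fun w => (enorm (noise t.+1 i p w) ^+ 2)%:E) =
            (fun w => (sq (noise t.+1 i p w))%:E) :> (T -> \bar R).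
    by apply/funext => w; rewrite enorm_sq.
  have := expE P _ (iXi p p0); rewrite unlock => ->.
  by rewrite lee_fin.
have hSX : \sum_(p <- index_iota 1 q) RI P (fun w => sq (noise t.+1 i p w)) <= (k - 1) * sigma ^+ 2.
  apply: (le_trans (y := \sum_(p <- index_iota 1 q) sigma ^+ 2)).
    rewrite big_seq_cond [X in _ <= X]big_seq_cond; apply: ler_sum => p.
    by rewrite mem_index_iota andbT => /andP[p0 _]; exact: hvar.
  rewrite sum_cst_seq size_iota -mulr_natl; apply: ler_wpM2r; first exact: sqr_ge0.
  by rewrite /k natrB // lerD2r ler_nat.
have fe1 : (fun w => enorm (gradF (M t w)) ^+ 2) = (fun w => sq (gradF (M t w))).
  by apply/funext => w; rewrite enorm_sq.
have fe2 : (fun w => enorm (W t i w - M t w) ^+ 2) = (fun w => sq (W t i w - M t w)).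
  by apply/funext => w; rewrite enorm_sq.
have fe3 : (fun w => enorm (gradf i (M t w)) ^+ 2) = (fun w => sq (gradf i (M t w))).
  by apply/funext => w; rewrite enorm_sq.
rewrite fe1 fe2 fe3 (expE P _ iY) (expE P _ ia2) (expE P _ iA) (expE P _ iG) (expE P _ iD).
rewrite -!EFinM -?EFinN -!EFinD ?lee_fin.
set rY := RI P (fun w => - dotv (gradF (M t w)) (gradf i (X t.+1 i q w))) in hRY *.
set ra := RI P (fun w => sq (gradF (M t w))) in hRY *.
set rA := RI P (fun w => sq (W t i w - M t w)) in hRY *.
set rG := RI P (fun w => sq (gradf i (M t w))) in hRY *.
set rD := RI P (fun w => dotv (gradF (M t w)) (gradf i (M t w))) in hRY *.
set SX := \sum_(p <- index_iota 1 q) _ in hRY hSX.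
have rA0 : 0 <= rA by apply: RI_ge0 => w; exact: sq_ge0.
have rG0 : 0 <= rG by apply: RI_ge0 => w; exact: sq_ge0.
have LE0 : 0 <= L ^+ 2 * eta ^+ 2 by apply: mulr_ge0; exact: sqr_ge0.
have s0 : 0 <= sigma ^+ 2 by exact: sqr_ge0.
have k20 : 0 <= k ^+ 2 by exact: sqr_ge0.
have c10 : 0 <= c1.
  rewrite /c1 -mulrA -mulrA; apply: mulr_ge0 => //; rewrite mulrA.
  apply: mulr_ge0 => //; lra.
have P1 : c1 * SX <= c1 * ((k - 1) * sigma ^+ 2) by apply: ler_wpM2l.
have hk2 : (k - 1) ^+ 2 <= k ^+ 2 by rewrite !expr2; nra.
have P2 : c1 * ((k - 1) * sigma ^+ 2) <= 4 * L ^+ 2 * eta ^+ 2 * k ^+ 2 * sigma ^+ 2.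
  have -> : c1 * ((k - 1) * sigma ^+ 2) = (4 * (L ^+ 2 * eta ^+ 2) * sigma ^+ 2) * (k - 1) ^+ 2.
    by rewrite /c1; ring.
  have -> : 4 * L ^+ 2 * eta ^+ 2 * k ^+ 2 * sigma ^+ 2 = (4 * (L ^+ 2 * eta ^+ 2) * sigma ^+ 2) * k ^+ 2.
    by ring.
  by apply: ler_wpM2l => //; apply: mulr_ge0 => //; apply: mulr_ge0.
have P3 : 0 <= L ^+ 2 * rA by apply: mulr_ge0 => //; exact: sqr_ge0.
have P4 : c2 * rG <= 16 * L ^+ 2 * eta ^+ 2 * k ^+ 2 * rG.
  have -> : c2 * rG = 8 * (L ^+ 2 * eta ^+ 2 * k ^+ 2 * rG) by rewrite /c2; ring.
  have -> : 16 * L ^+ 2 * eta ^+ 2 * k ^+ 2 * rG = 16 * (L ^+ 2 * eta ^+ 2 * k ^+ 2 * rG) by ring.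
  have : 0 <= L ^+ 2 * eta ^+ 2 * k ^+ 2 * rG by apply: mulr_ge0 => //; exact: mulr_ge0.
  lra.
have -> : ra / 4 = 4^-1 * ra by rewrite mulrC.
lra.
Qed.
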